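(* Let $d_{2,Q}(t,x)=x^4+2t^2x^2-8t^2x+t^4$, $d_{2,P+Q}(t,x)=x^4+2t^2x^2-8t^2x+t^4+t(4x^3-4t^2x+4t^2)$ and $g(t,x)=x^3-t^2x+t^2$. Then there are no integers $t_0>2$ and $x_0$ such that $d_{2,Q}(t_0,x_0)=0$, or $d_{2,P+Q}(t_0,x_0)=0$, or $g(t_0,x_0)=0$.
   Context: These are the $2$-division polynomials (after clearing denominators) of the points $Q=(0,t)$ and $P+Q$ (with $P=(t,t)$) and one quarter of $\psi_2^2$ on $E: y^2=x^3-t^2x+t^2$ over $\mathbb Q(t)$. *)

(* Defs.v *)
From Stdlib Require Import ZArith.
Open Scope Z_scope.

Definition d2Q (t x : Z) : Z := x^4 + 2*t^2*x^2 - 8*t^2*x + t^4.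

Definition d2PQ (t x : Z) : Z :=
  x^4 + 2*t^2*x^2 - 8*t^2*x + t^4 + t*(4*x^3 - 4*t^2*x + 4*t^2).

Definition gE (t x : Z) : Z := x^3 - t^2*x + t^2.

(* Main.v *)
Require Import Defs.
From Stdlib Require Import ZArith Lia Psatz.
Open Scope Z_scope.

Lemma noQ t x : t > 2 -> d2Q t x <> 0.
Proof.
  unfold d2Q; intros Ht H.
  assert (E : (x^2+t^2)^2 = 8*t^2*x) by (rewrite <- Z.sub_move_0_r; rewrite <- H; ring).
  assert (Ht2 : t^2 > 0) by nia.
  assert (Hx : x > 0).
  { destruct (Z_le_gt_dec x 0); [|lia]. assert (0 < (x^2+t^2)^2) by nia. nia. }
  assert (A : (x^2+t^2)^2 >= 4*x^2*t^2) by (assert (0 <= (x^2-t^2)^2) by nia; nia).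
  assert (x <= 2) by nia.
  assert (B : (x^2+t^2)^2 >= t^2*t^2) by nia.
  assert (t^2 <= 16) by nia.
  assert (t <= 4) by nia.
  assert (Hx2 : x = 1 \/ x = 2) by lia.
  assert (Ht3 : t = 3 \/ t = 4) by lia.
  destruct Hx2 as [-> | ->]; destruct Ht3 as [-> | ->]; simpl in E; lia.
Qed.

Lemma noPQ t x : t > 2 -> d2PQ t x <> 0.
Proof.
  unfold d2PQ; intros Ht H.
  assert (E1 : (x^2 + 2*t*x - t^2)^2 = 4*t^2*(2*x-t)) by
    (rewrite <- Z.sub_move_0_r; rewrite <- H; ring).
  assert (E2 : 4*(x^2 + 2*t*x - t^2) = (2*x-t)^2 + 6*t*(2*x-t) + t^2) by ring.
  generalize dependent (x^2 + 2*t*x - t^2). intros y E1 E2.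
  generalize dependent (2*x-t). intros c E1 E2.
  clear H x.
  assert (Ht2 : t^2 > 0) by (apply Z.lt_gt, Z.pow_pos_nonneg; lia).
  assert (Hy0 : 0 <= y^2) by (apply Z.pow_even_nonneg; exists 1; reflexivity).
  assert (Hc : c >= 0).
  { destruct (Z_lt_ge_dec c 0); [|lia].
    assert (t^2 * c < 0) by (apply Z.mul_pos_neg; lia). lia. }
  assert (Hc2 : 0 <= c^2) by (apply Z.pow_even_nonneg; exists 1; reflexivity).
  assert (Htc : 0 <= t*c) by (apply Z.mul_nonneg_nonneg; lia).
  assert (Hy : 4*y >= 6*t*c + t^2) by lia.
  assert (Hy2 : (6*t*c+t^2)*(6*t*c+t^2) <= (4*y)*(4*y)) by
    (apply Z.mul_le_mono_nonneg; lia).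
  assert (H3 : t^2*(36*c^2 + 12*t*c + t^2) <= t^2*(64*c)).
  { replace (t^2*(64*c)) with ((4*y)*(4*y)) by (transitivity (16*y^2); [ring | rewrite E1; ring]).
    replace (t^2*(36*c^2 + 12*t*c + t^2)) with ((6*t*c+t^2)*(6*t*c+t^2)) by ring. exact Hy2. }
  assert (H4 : 36*c^2 + 12*t*c + t^2 <= 64*c).
  { apply (Z.mul_le_mono_pos_l _ _ (t^2)); lia. }
  destruct (Z.eq_dec c 0) as [->|Hc0]; [lia|].
  assert (12*t*c >= 36*c) by nia.
  assert (c^2 = c*c) by ring.
  nia.
Qed.

Lemma noG t x : t > 2 -> gE t x <> 0.
Proof.
  unfold gE; intros Ht H.
  assert (E : x*(x*x) - t*t*x + t*t = 0) by (rewrite <- H; ring).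
  clear H.
  destruct (Z_lt_le_dec x 0) as [Hn|Hp].
  - set (u := -x). assert (Hu : u > 0) by lia.
    assert (E' : u*(u*u) = t*t*(u+1)) by (unfold u; lia).
    clearbody u. clear E Hn x.
    assert (u*u > t*t) by nia.
    assert (u >= t+1) by nia.
    assert (u*(u*u) >= (t+1)*(t+1)*u) by nia.
    nia.
  - assert (x <> 0) by (intro; subst; ring_simplify in E; nia).
    assert (x <> 1) by (intro; subst; ring_simplify in E; lia).
    assert (E2 : (x-1)*(t*t - x*x - x - 1) = 1) by (transitivity (1 - (x*(x*x) - t*t*x + t*t)); [ring | rewrite E; ring]).
    assert (x = 2).
    { destruct (Z_le_gt_dec (t*t - x*x - x - 1) 0).
      - assert ((x-1)*(t*t - x*x - x - 1) <= 0) by (apply Z.mul_nonneg_nonpos; lia). lia.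
      - assert ((x-1)*(t*t - x*x - x - 1) >= (x-1)*1) by (apply Z.le_ge, Z.mul_le_mono_nonneg_l; lia). lia. }
    subst.
    assert (t*t = 8) by lia. nia.
Qed.

Theorem proposition4p2 :
  ~ (exists t0 x0 : Z, t0 > 2 /\
       (d2Q t0 x0 = 0 \/ d2PQ t0 x0 = 0 \/ gE t0 x0 = 0)).
Proof.
  intros [t [x [Ht [H|[H|H]]]]].
  - exact (noQ t x Ht H).
  - exact (noPQ t x Ht H).
  - exact (noG t x Ht H).
Qed.
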